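(* Suppose $p_1,p_2,p_3\in V$ have Gram matrix $\begin{pmatrix}1&t_1&t\\ t_1&1&t_2\overline\lambda\\ t&t_2\lambda&1\end{pmatrix}$ (i.e. $\langle p_i,p_j\rangle$ is the $(i,j)$ entry), where $t,t_1,t_2>1$, $|\lambda|=1$, $\lambda\ne1$. Put $m_1:=\frac{p_1-p_2}{\sqrt{2(t_1-1)}}$ and $m_2:=\frac{\lambda p_2-p_3}{\sqrt{2(t_2-1)}}$. Then $$\mathrm{Re}\frac{\langle p_1,m_2\rangle\langle m_1,m_1\rangle}{\langle m_1,m_2\rangle\langle p_1,m_1\rangle}=1+\frac{t^2-tt_1+t_1^2-(t_2-1)^2+tt_1(1-2\mathrm{Re}\lambda)}{(t_1+t_2-1)^2+t^2-2t(t_1+t_2-1)\mathrm{Re}\lambda},$$ $$\mathrm{tr}\big(R(m_2)R(m_1)R(p_1)\big)=2t(\overline\lambda-1)+\frac{2tt_1-t-t_1+1-2t_2}{t_1-1}-\frac{t^2-tt_1+t_1^2-(t_2-1)^2+t(t_1+t_2-1)(1-2\mathrm{Re}\lambda)}{(t_1-1)(t_2-1)}.$$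
   Context: $V$ is a $3$-dimensional complex vector space with a hermitian form $\langle-,-\rangle$ (linear in the first argument) of signature $++-$. For nonisotropic $p\in V$, $R(p)$ is the linear map $x\mapsto 2\frac{\langle x,p\rangle}{\langle p,p\rangle}p-x$. *)

(* Defs.v *)
From HB Require Import structures.
From mathcomp Require Import all_boot all_order all_algebra.
From mathcomp Require Import reals.
From mathcomp Require Import complex.
Set Implicit Arguments. Unset Strict Implicit. Unset Printing Implicit Defensive.
Import Order.TTheory GRing.Theory Num.Theory ComplexField.
Local Open Scope ring_scope.
Local Open Scope complex_scope.

(* V = C^3 as row vectors; the hermitian form <x,y> = x H y^* (linear in x). *)
Definition hform (R : rcfType) (H : 'M[R[i]]_3) (x y : 'rV[R[i]]_3) : R[i] :=
  (x *m H *m (map_mx conjc y)^T) 0 0.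

Definition sig_pp_m (R : rcfType) (H : 'M[R[i]]_3) : Prop :=
  H = (map_mx conjc H)^T /\
  exists P : 'M[R[i]]_3, P \in unitmx /\
    P *m H *m (map_mx conjc P)^T = diag_mx (\row_(k < 3) (if k == 2%N :> nat then -1 else 1)).

Definition refl (R : rcfType) (H : 'M[R[i]]_3) (p : 'rV[R[i]]_3) (x : 'rV[R[i]]_3) : 'rV[R[i]]_3 :=
  (2 * hform H x p / hform H p p) *: p - x.

(* Main.v *)
Require Import Defs.
From HB Require Import structures.
From mathcomp Require Import all_boot all_order all_algebra.
From mathcomp Require Import reals complex.
From mathcomp Require Import ring lra.
Import Order.TTheory GRing.Theory Num.Theory ComplexField.
Local Open Scope ring_scope.
Local Open Scope complex_scope.

Section H.
Variable (R : realType) (H : 'M[R[i]]_3).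
Implicit Types (x y z : 'rV[R[i]]_3) (a : R[i]).

Lemma hformDl x y z : hform H (x + y) z = hform H x z + hform H y z.
Proof. by rewrite /hform !mulmxDl mxE. Qed.
Lemma hformZl a x z : hform H (a *: x) z = a * hform H x z.
Proof. by rewrite /hform -!scalemxAl mxE. Qed.
Lemma hformNl x z : hform H (- x) z = - hform H x z.
Proof. by rewrite -scaleN1r hformZl mulN1r. Qed.
Lemma hformBl x y z : hform H (x - y) z = hform H x z - hform H y z.
Proof. by rewrite hformDl hformNl. Qed.
Lemma hformDr x y z : hform H x (y + z) = hform H x y + hform H x z.
Proof. by rewrite /hform map_mxD linearD /= mulmxDr mxE. Qed.
Lemma hformZr a x z : hform H x (a *: z) = (conjc a) * hform H x z.
Proof. by rewrite /hform map_mxZ linearZ /= -scalemxAr mxE. Qed.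
Lemma hformNr x z : hform H x (- z) = - hform H x z.
Proof. by rewrite -scaleN1r hformZr rmorphN rmorph1 mulN1r. Qed.
Lemma hformBr x y z : hform H x (y - z) = hform H x y - hform H x z.
Proof. by rewrite hformDr hformNr. Qed.

Lemma sum_rank1 (a b : 'rV[R[i]]_3) : \sum_(i < 3) hform H (delta_mx 0 i) a * b 0 i = hform H b a.
Proof.
rewrite /hform -[in RHS]mulmxA [in RHS]mxE; apply: eq_bigr => i _.
by rewrite -mulmxA -rowE mxE mulrC.
Qed.

Lemma tr_lemma (f : 'rV[R[i]]_3 -> 'rV[R[i]]_3) (a1 a2 a3 b1 b2 b3 : 'rV[R[i]]_3) :
  (forall x, f x = hform H x a1 *: b1 + hform H x a2 *: b2 + hform H x a3 *: b3 - x) ->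
  \tr (lin1_mx f) = hform H b1 a1 + hform H b2 a2 + hform H b3 a3 - 3%:R.
Proof.
move=> Hf; rewrite /mxtrace.
transitivity (\sum_(i < 3) (hform H (delta_mx 0 i) a1 * b1 0 i + hform H (delta_mx 0 i) a2 * b2 0 i
   + hform H (delta_mx 0 i) a3 * b3 0 i - 1)).
  apply: eq_bigr => i _; rewrite mxE Hf !mxE !eqxx /=; done.
rewrite !big_split /= !sum_rank1 sumrN; congr (_ - _).
by rewrite sumr_const card_ord.
Qed.

Lemma refl_scale (u : R[i]) (q x : 'rV[R[i]]_3) : u != 0 ->
  refl H (u *: q) x = refl H q x.
Proof.
move=> u0; rewrite /refl !(hformZl, hformZr) scalerA; congr (_ *: q - x).
have uc0 : u^* != 0 by rewrite conjc_eq0.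
have [->|h0] := eqVneq (hform H q q) 0; first by rewrite !(mulr0, invr0, mul0r).
by field; rewrite h0 u0 uc0.
Qed.

Lemma comp_pt (q1 q2 q3 x : 'rV[R[i]]_3) :
  let c1 := 2 / hform H q1 q1 in let c2 := 2 / hform H q2 q2 in let c3 := 2 / hform H q3 q3 in
  refl H q3 (refl H q2 (refl H q1 x)) =
    hform H x q1 *: (c1 *: q1 - (c1 * c2 * hform H q1 q2) *: q2 - (c1 * c3 * hform H q1 q3) *: q3
                     + (c1 * c2 * c3 * hform H q1 q2 * hform H q2 q3) *: q3)
  + hform H x q2 *: (c2 *: q2 - (c2 * c3 * hform H q2 q3) *: q3)
  + hform H x q3 *: (c3 *: q3) - x.
Proof.
rewrite /refl !(hformBl, hformZl, hformDl).
apply/rowP => j; rewrite !mxE. ring.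
Qed.

Lemma tr3 (q1 q2 q3 : 'rV[R[i]]_3) :
  let c1 := 2 / hform H q1 q1 in let c2 := 2 / hform H q2 q2 in let c3 := 2 / hform H q3 q3 in
  \tr (lin1_mx (refl H q3 \o refl H q2 \o refl H q1)) =
   c1 * hform H q1 q1 + c2 * hform H q2 q2 + c3 * hform H q3 q3
   - c1 * c2 * hform H q1 q2 * hform H q2 q1
   - c1 * c3 * hform H q1 q3 * hform H q3 q1
   - c2 * c3 * hform H q2 q3 * hform H q3 q2
   + c1 * c2 * c3 * hform H q1 q2 * hform H q2 q3 * hform H q3 q1 - 3%:R.
Proof.
move=> c1 c2 c3.
rewrite (@tr_lemma _ q1 q2 q3 _ _ _ (fun x => comp_pt q1 q2 q3 x)) !(hformBl, hformZl, hformDl) -/c1 -/c2 -/c3.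
ring.
Qed.
End H.

Section C.
Variable R : realType.
Implicit Types x y : R[i].
Lemma cjM x y : (conjc (x * y)) = (conjc x) * (conjc y). Proof. exact: rmorphM. Qed.
Lemma cjD x y : (conjc (x + y)) = (conjc x) + (conjc y). Proof. exact: rmorphD. Qed.
Lemma cjB x y : (conjc (x - y)) = (conjc x) - (conjc y). Proof. exact: rmorphB. Qed.
Lemma cjN x : (conjc (- x)) = - (conjc x). Proof. exact: rmorphN. Qed.
Lemma cjV x : (conjc (x^-1)) = ((conjc x))^-1. Proof. exact: conjc_inv. Qed.
Lemma cj1 : (conjc (1 : R[i])) = 1. Proof. exact: rmorph1. Qed.
Lemma cjn n : (conjc (n%:R : R[i])) = n%:R. Proof. exact: rmorph_nat. Qed.
Implicit Types a b : R.
Lemma rcM a b : (a * b)%:C = a%:C * b%:C :> R[i]. Proof. exact: rmorphM. Qed.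
Lemma rcD a b : (a + b)%:C = a%:C + b%:C :> R[i]. Proof. exact: rmorphD. Qed.
Lemma rcB a b : (a - b)%:C = a%:C - b%:C :> R[i]. Proof. exact: rmorphB. Qed.
Lemma rcN a : (- a)%:C = - a%:C :> R[i]. Proof. exact: rmorphN. Qed.
Lemma rcV a : (a^-1)%:C = (a%:C)^-1 :> R[i]. Proof. exact: fmorphV. Qed.
Lemma rc1 : (1 : R)%:C = 1 :> R[i]. Proof. exact: rmorph1. Qed.
Lemma rcn n : (n%:R : R)%:C = n%:R :> R[i]. Proof. exact: rmorph_nat. Qed.
Lemma rcX a n : (a ^+ n)%:C = a%:C ^+ n :> R[i]. Proof. exact: rmorphXn. Qed.
Lemma cjr a : conjc (a%:C : R[i]) = a%:C. Proof. exact: conjc_real. Qed.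
Lemma cjK x : conjc (conjc x) = x. Proof. exact: conjcK. Qed.
Lemma ncj x : Num.conj x = conjc x. Proof. by []. Qed.
End C.

Theorem lemma4p4 (R : realType) (H : 'M[R[i]]_3) (p1 p2 p3 : 'rV[R[i]]_3)
  (t t1 t2 : R) (lam : R[i]) :
  sig_pp_m H ->
  1 < t -> 1 < t1 -> 1 < t2 -> `|lam| = 1 -> lam != 1 ->
  hform H p1 p1 = 1 -> hform H p1 p2 = t1%:C -> hform H p1 p3 = t%:C ->
  hform H p2 p1 = t1%:C -> hform H p2 p2 = 1 -> hform H p2 p3 = t2%:C * lam^* ->
  hform H p3 p1 = t%:C -> hform H p3 p2 = t2%:C * lam -> hform H p3 p3 = 1 ->
  let m1 := (Num.sqrt (2 * (t1 - 1)))^-1%:C *: (p1 - p2) in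
  let m2 := (Num.sqrt (2 * (t2 - 1)))^-1%:C *: (lam *: p2 - p3) in
  let rl := complex.Re lam in
  complex.Re (hform H p1 m2 * hform H m1 m1 / (hform H m1 m2 * hform H p1 m1)) =
    1 + (t ^+ 2 - t * t1 + t1 ^+ 2 - (t2 - 1) ^+ 2 + t * t1 * (1 - 2 * rl)) /
        ((t1 + t2 - 1) ^+ 2 + t ^+ 2 - 2 * t * (t1 + t2 - 1) * rl)
  /\
  \tr (lin1_mx (refl H m2 \o refl H m1 \o refl H p1)) =
    2 * t%:C * (lam^* - 1)
    + ((2 * t * t1 - t - t1 + 1 - 2 * t2) / (t1 - 1))%:C
    - ((t ^+ 2 - t * t1 + t1 ^+ 2 - (t2 - 1) ^+ 2 + t * (t1 + t2 - 1) * (1 - 2 * rl))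
        / ((t1 - 1) * (t2 - 1)))%:C.
Proof.
move=> _ ht ht1 ht2 hlam hl1 h11 h12 h13 h21 h22 h23 h31 h32 h33.
set u1 := (Num.sqrt (2 * (t1 - 1)))^-1.
set u2 := (Num.sqrt (2 * (t2 - 1)))^-1.
move=> m1 m2 rl.
rewrite !ncj in h23 *.
have hll : lam * conjc lam = 1.
  rewrite -[1](expr1n _ 2) -hlam -add_Re2_Im2; case: (lam) => a b; simpc.
  by congr (_ +i* _); ring.
have lam0 : lam != 0 by apply/eqP => l0; move: hll; rewrite l0 mul0r => /eqP; rewrite eq_sym oner_eq0.
have hl : conjc lam = lam^-1 by apply: (mulfI lam0); rewrite hll divff.
have hrl : rl%:C = (lam + lam^-1) / 2 by rewrite /rl ReJ_add hl.
have u1p : 0 < u1 by rewrite invr_gt0 sqrtr_gt0 mulr_gt0 // subr_gt0.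
have u2p : 0 < u2 by rewrite invr_gt0 sqrtr_gt0 mulr_gt0 // subr_gt0.
have u10 : u1%:C != 0 by rewrite (inj_eq (@complexI R)) gt_eqF.
have u20 : u2%:C != 0 by rewrite (inj_eq (@complexI R)) gt_eqF.
have nz : forall a b : R, 0 < a -> 0 < b -> lam * a%:C - b%:C != 0.
  move=> a b a0 b0; apply/eqP => E.
  have E1 : lam * a%:C = b%:C by apply/eqP; rewrite -subr_eq0 E.
  have a0C : a%:C != 0 :> R[i] by rewrite (inj_eq (@complexI R)) gt_eqF.
  have El : lam = (b / a)%:C by rewrite rcM rcV -E1 mulfK.
  move: hll; rewrite El cjr -rcM -rc1 => /(@complexI R) /eqP.
  rewrite -expr2 sqrf_eq1 => /orP [/eqP e1|/eqP e2].
    by move/eqP: hl1; apply; rewrite El e1 rc1.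
  by move: (divr_gt0 b0 a0); rewrite e2 ltr0N1.
have T0 : 0 < t1 + t2 - 1 by lra.
have t0 : 0 < t by lra.
have sA := nz _ _ T0 t0.
have sB := nz _ _ t0 T0.
rewrite !(rcB, rcD, rcN, rc1) in sA sB.
have s1C : (Num.sqrt (2 * (t1 - 1)))%:C != 0 :> R[i].
  by rewrite (inj_eq (@complexI R)) gt_eqF // sqrtr_gt0 mulr_gt0 // subr_gt0.
have s2C : (Num.sqrt (2 * (t2 - 1)))%:C != 0 :> R[i].
  by rewrite (inj_eq (@complexI R)) gt_eqF // sqrtr_gt0 mulr_gt0 // subr_gt0.
have t1C : 1 - t1%:C != 0 :> R[i].
  by rewrite -rc1 -rcB (inj_eq (@complexI R)) subr_eq0 lt_eqF.
have t2C : 1 - t2%:C != 0 :> R[i].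
  by rewrite -rc1 -rcB (inj_eq (@complexI R)) subr_eq0 lt_eqF.
split.
  apply: (@complexI R); rewrite ReJ_add /m1 /m2.
  rewrite !(hformBl, hformZl, hformBr, hformZr, hformDl, hformDr).
  rewrite ?h11 ?h12 ?h13 ?h21 ?h22 ?h23 ?h31 ?h32 ?h33.
  rewrite !(cjM, cjD, cjB, cjN, cjV, cj1, cjn, cjr, cjK).
rewrite ?hl.
  rewrite !(rcM, rcD, rcB, rcN, rcV, rc1, rcn, rcX) hrl.
  field.
  rewrite lam0 /=; repeat (apply/andP; split).
  - match goal with |- is_true (?X != 0) =>
      have -> : X = - ((lam * (t1%:C + t2%:C - 1) - t%:C) * (lam * t%:C - (t1%:C + t2%:C - 1))) by ring end.
    by rewrite oppr_eq0; apply: mulf_neq0.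
  - exact: s1C.
  - exact: s2C.
  - exact: t1C.
  - match goal with |- is_true (?X != 0) =>
      have -> : X = lam * (t1%:C + t2%:C - 1) - t%:C by ring end; done.
  - match goal with |- is_true (?X != 0) =>
      have -> : X = - (lam * t%:C - (t1%:C + t2%:C - 1)) by ring end.
    by rewrite oppr_eq0.
have -> : lin1_mx (refl H m2 \o refl H m1 \o refl H p1) =
          lin1_mx (refl H (lam *: p2 - p3) \o refl H (p1 - p2) \o refl H p1).
  by apply/matrixP => i j; rewrite mxE [in RHS]mxE /= /m1 /m2 !refl_scale.
rewrite tr3 !(hformBl, hformZl, hformBr, hformZr, hformDl, hformDr).
rewrite ?h11 ?h12 ?h13 ?h21 ?h22 ?h23 ?h31 ?h32 ?h33.
rewrite ?(cjM, cjD, cjB, cjN, cjV, cj1, cjn, cjr, cjK).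
rewrite ?hl.
rewrite !(rcM, rcD, rcB, rcN, rcV, rc1, rcn, rcX) hrl.
field.
have t1C' : t1%:C - 1 != 0 :> R[i] by rewrite -oppr_eq0 opprB.
have t2C' : t2%:C - 1 != 0 :> R[i] by rewrite -oppr_eq0 opprB.
repeat (apply/andP; split) => //.
- match goal with |- is_true (?X != 0) => have -> : X = 2 * (1 - t2%:C) by ring end.
  by rewrite mulf_neq0 // pnatr_eq0.
- match goal with |- is_true (?X != 0) => have -> : X = 2 * (1 - t1%:C) by ring end.
  by rewrite mulf_neq0 // pnatr_eq0.
Qed.
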